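(* Let $d\ge 3$, $F \leq F' \leq \mathrm{Sym}(\Omega)$ with $F'$ preserving each $F$-orbit in $\Omega$, and $n = [F':F]$. Let $G(F,F')$ act on $X_{n,d}$ via the embedding $\varphi$, i.e. $\gamma \cdot (f,e) = (f^\gamma, \gamma e)$ with $(f^\gamma)_v = \alpha(\sigma(\gamma,\gamma^{-1}v)) \cdot f_{\gamma^{-1}v}$. Then: (a) $G(F,F')^\ast$ acts on the vertex set of $X_{n,d}$ with finitely many orbits; if $F$ is transitive on $\Omega$, then $G(F,F')^\ast$ acts transitively on the vertices of $X_{n,d}$. (b) For every $e \in E_d$, the stabilizer of the vertex $((0),e)$ in $G(F,F')$ equals the stabilizer of $e$ in $U(F)$. In particular the action of $G(F,F')$ on $X_{n,d}$ is proper. Consequently, when $F$ is regular, $G(F,F')^\ast$ acts freely and transitively on the vertices of $X_{n,d}$.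
   Context: $\Omega$ is a set with $|\Omega|=d$; $T_d$ is the $d$-regular tree with vertex set $V_d$, edge set $E_d$, with a coloring $c: E_d\to\Omega$ restricting at each vertex $v$ to a bijection from the set $E(v)$ of edges at $v$ onto $\Omega$. Local permutation: $\sigma(g,v) = c|_{E(gv)} \circ g \circ (c|_{E(v)})^{-1}$. $U(F)$: automorphisms with all local permutations in $F$. $G(F,F')$: automorphisms with all local permutations in $F'$ and all but finitely many in $F$, with the topology making the inclusion of $U(F)$ continuous and open; $G(F,F')^\ast$ is its index-two subgroup preserving the bipartition of $T_d$. A permutation group is semi-regular if point stabilizers are trivial, regular if transitive and semi-regular. $\Sigma_n=\{0,\dots,n-1\}$, $\mathfrak S_n=\mathrm{Sym}(\Sigma_n)$; $\alpha: F' \to \mathfrak{S}_n$ is the action of $F'$ on $F'/F$ transported via a fixed bijection $\Sigma_n \to F'/F$ with $0 \mapsto F$. The graph $X_{n,d}$ has vertex set $\Sigma_n^{(V_d)} \times E_d$ ($\Sigma_n^{(V_d)}$ the finitely supported functions $f: V_d\to\Sigma_n$); $(f,e)\sim(f,e')$ (type 1) if $e,e'$ share exactly one vertex, and $(f,e)\sim(f',e)$ (type 2) if $f'$ differs from $f$ at exactly one vertex, which lies in $e$. $(0)$ denotes the zero function. *)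

(* Defs.v *)
From HB Require Import structures.
From mathcomp Require Import all_boot all_order all_fingroup.
Set Implicit Arguments. Unset Strict Implicit. Unset Printing Implicit Defensive.

Local Open Scope group_scope.

Section Tree.
Variable d : nat.
(* Omega = 'I_d.  Vertices of T_d: reduced words over 'I_d (no two consecutive
   equal letters), stored with the LAST letter at the head of the list.
   v and v.a are adjacent, the edge {v, v.a} having colour a. *)
Definition reduced (s : seq 'I_d) : bool := sorted (fun x y : 'I_d => x != y) s.

Definition V := {s : seq 'I_d | reduced s}.

Definition step_seq (s : seq 'I_d) (a : 'I_d) : seq 'I_d :=
  if ohead s == Some a then behead s else a :: s.

Lemma reduced_behead s : reduced s -> reduced (behead s).
Proof. by case: s => //= x s /path_sorted. Qed.

Lemma reduced_step s a : reduced s -> reduced (step_seq s a).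
Proof.
rewrite /step_seq; case: s => [|x s] //= H.
case: eqP => [_|ne] //=; first exact: path_sorted H.
rewrite /reduced /= H andbT; apply/eqP => ax; apply: ne; by rewrite ax.
Qed.

Definition step (v : V) (a : 'I_d) : V :=
  exist _ (step_seq (val v) a) (reduced_step a (valP v)).

Definition vbehead (v : V) : V :=
  exist _ (behead (val v)) (reduced_behead (valP v)).

Definition adj (u w : V) : bool := [exists a, w == step u a].

(* Edges of T_d: an edge is represented by its endpoint farther from the root
   (a nonempty word); its endpoints are e and vbehead e. *)
Definition E := {v : V | 0 < size (val v)}.

Definition is_aut (g : V -> V) : Prop :=
  bijective g /\ forall u w, adj (g u) (g w) = adj u w.

Definition loc (g : V -> V) (v : V) (a : 'I_d) : 'I_d :=
  odflt a [pick b | g (step v a) == step (g v) b].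

(* local permutation sigma(g, v) (identity if g is not locally injective) *)
Definition lp (g : V -> V) (v : V) : {perm 'I_d} :=
  insubd (1 : {perm 'I_d}) [ffun a => loc g v a].

Definition longer (u w : V) : V := if size (val w) < size (val u) then u else w.
Definition eact (g : V -> V) (e : E) : E :=
  odflt e (insub (longer (g (val e)) (g (vbehead (val e))))).

Definition inU (F : {set {perm 'I_d}}) (g : V -> V) : Prop :=
  is_aut g /\ forall v, lp g v \in F.

Definition inG (F F' : {set {perm 'I_d}}) (g : V -> V) : Prop :=
  [/\ is_aut g, (forall v, lp g v \in F') &
      exists s : seq V, forall v, lp g v \notin F -> v \in s].

(* G(F,F')^*: elements preserving the bipartition (parity of word length) *)
Definition inGstar (F F' : {set {perm 'I_d}}) (g : V -> V) : Prop :=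
  inG F F' g /\ forall v, odd (size (val (g v))) = odd (size (val v)).

Definition regular_pgroup (F : {group {perm 'I_d}}) : Prop :=
  [transitive F, on [set: 'I_d] | 'P] /\ forall a, 'C_F[a | 'P] = 1.

Variable n : nat.
(* alpha : F' -> Sym(Sigma_n), action of F' on F'/F = {s o f | f in F}
   (function composition), transported along beta : 'I_n -> cosets.
   In MathComp (p * q) = q o p, so the coset s o F is the right coset F :* s
   and p o - acts as (- :* p). *)
Definition alpha (beta : 'I_n -> {set {perm 'I_d}}) (p : {perm 'I_d}) (i : 'I_n)
  : 'I_n := odflt i [pick j | beta j == beta i :* p].

(* vertices of X_{n,d}: pairs (f, e) with f finitely supported *)
Definition finsupp (f : V -> 'I_n) : Prop :=
  exists s : seq V, forall v, val (f v) != 0 -> v \in s.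

(* g . (f, e) = (f', e')  iff  f'(g w) = alpha(sigma(g,w)) (f w) for all w
   and g e = e'  (this determines f' since g is bijective) *)
Definition xact (beta : 'I_n -> {set {perm 'I_d}}) (g : V -> V)
  (x y : (V -> 'I_n) * E) : Prop :=
  (forall w, y.1 (g w) = alpha beta (lp g w) (x.1 w)) /\ eact g x.2 = y.2.

End Tree.

(* Main.v *)
Require Import Defs.
From HB Require Import structures.
From mathcomp Require Import all_boot all_order all_fingroup zify.
Set Implicit Arguments. Unset Strict Implicit. Unset Printing Implicit Defensive.
Local Open Scope group_scope.

Section TreeLemmas.
Variable d : nat.
Implicit Types (v w u x y : V d) (a b c : 'I_d).

Lemma val_step v a : val (step v a) = step_seq (val v) a.
Proof. by []. Qed.

Lemma stepK v a : step (step v a) a = v.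
Proof.
apply: val_inj; rewrite !val_step; case: v => s /= Hs.
rewrite /step_seq; case: s Hs => [|x s] //= Hs; first by rewrite eqxx.
case: (eqVneq (Some x) (Some a)) => [[<-]|ne] /=.
  case: s Hs => [|y s] //= /andP[xy _].
  by case: eqP => // [[yx]]; rewrite yx eqxx in xy.
by rewrite eqxx.
Qed.

Lemma size_step v a :
  size (val (step v a)) = if ohead (val v) == Some a then (size (val v)).-1
                          else (size (val v)).+1.
Proof. by rewrite val_step /step_seq; case: ifP => //; case: (val v). Qed.

Lemma odd_step v a : odd (size (val (step v a))) = ~~ odd (size (val v)).
Proof.
rewrite size_step; case: ifP => //=; case: (val v) => //= x s _.
by rewrite negbK.
Qed.

Lemma step_inj v a b : step v a = step v b -> a = b.
Proof.
move=> /(congr1 val); rewrite !val_step /step_seq.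
case: (val v) => [|x s] /=; first by case.
case: (eqVneq (Some x) (Some a)) => [[<-]|na]; case: (eqVneq (Some x) (Some b)) => [[<-]|nb] //=.
- by move=> /(congr1 size) /=; lia.
- by move=> /(congr1 size) /=; lia.
- by case.
Qed.

Lemma step_injl v w a : step v a = step w a -> v = w.
Proof. by move=> H; rewrite -(stepK v a) H stepK. Qed.

Lemma adjP u w : reflect (exists a, w = step u a) (adj u w).
Proof.
apply: (iffP existsP) => [[a /eqP]|[a ->]]; first by exists a.
by exists a.
Qed.

Definition rootV : V d := exist _ [::] isT.

Definition mulV (x : V d) (t : seq 'I_d) : V d :=
  foldr (fun a acc => step acc a) x t.

Lemma mulV_cons x a t : mulV x (a :: t) = step (mulV x t) a.
Proof. by []. Qed.

Lemma mulV_step x (s : seq 'I_d) a : reduced s ->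
  mulV x (step_seq s a) = step (mulV x s) a.
Proof.
rewrite /step_seq; case: s => [|y s] //= Hs.
case: (eqVneq (Some y) (Some a)) => [[<-]|ne] //=.
by rewrite stepK.
Qed.

Lemma mulV_assoc x y t : mulV x (val (mulV y t)) = mulV (mulV x (val y)) t.
Proof.
elim: t => [|a t IH] //.
by rewrite !mulV_cons val_step mulV_step ?IH //; exact: valP.
Qed.

Lemma mulV_root v : mulV rootV (val v) = v.
Proof.
case: v => s Hs; apply: val_inj => /=.
elim: s Hs => [|a s IH] // Hs.
have Hs' : reduced s by exact: (path_sorted Hs).
rewrite mulV_cons val_step /= (IH Hs') /step_seq.
case: s Hs {IH Hs'} => [|b s] //= /andP[ab _].
by case: eqP => // [[ba]]; rewrite ba eqxx in ab.
Qed.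

Lemma reduced_rev (s : seq (ordinal d)) : reduced s -> reduced (rev s).
Proof.
rewrite /reduced rev_sorted; apply: sub_sorted => x y /=.
by rewrite eq_sym.
Qed.

Definition invV (v : V d) : V d := exist _ (rev (val v)) (reduced_rev (valP v)).

Lemma mulV_rev v : mulV v (rev (val v)) = rootV.
Proof.
case: v => s Hs /=.
elim: s Hs => [|a s IH] Hs; first by apply: val_inj.
have Hs' : reduced s by exact: (path_sorted Hs).
rewrite rev_cons /mulV foldr_rcons -/(mulV _ _).
have -> : step (exist (fun s => reduced s) (a :: s) Hs) a = exist _ s Hs'.
  by apply: val_inj; rewrite val_step /step_seq /= eqxx.
exact: IH.
Qed.

Lemma mulV_inv v : mulV (invV v) (val v) = rootV.
Proof.
have := mulV_rev (invV v); by rewrite /= revK.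
Qed.

Definition rel (u w : V d) : seq 'I_d := val (mulV (invV u) (val w)).

Lemma rel_reduced u w : reduced (rel u w).
Proof. exact: valP. Qed.

Lemma relK u w : mulV u (rel u w) = w.
Proof.
rewrite /rel mulV_assoc.
have -> : mulV u (val (invV u)) = rootV by exact: mulV_rev.
exact: mulV_root.
Qed.

Lemma rel_step u w a : rel u (step w a) = step_seq (rel u w) a.
Proof.
by rewrite /rel val_step mulV_step ?val_step //; exact: valP.
Qed.

Lemma rel_id u : rel u u = [::].
Proof. by rewrite /rel mulV_inv. Qed.

Lemma rel_mulV u t : reduced t -> rel u (mulV u t) = t.
Proof.
move=> Ht; rewrite /rel.
have -> : t = val (exist (fun s => reduced s) t Ht) by [].
rewrite mulV_assoc mulV_inv mulV_root //.
Qed.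

Lemma odd_mulV x t : odd (size (val (mulV x t))) = odd (size (val x)) (+) odd (size t).
Proof.
elim: t => [|a t IH] /=; first by rewrite addbF.
by rewrite odd_step IH addbN.
Qed.


Lemma lp_eq (g : V d -> V d) w (p : {perm 'I_d}) :
  (forall a, loc g w a = p a) -> lp g w = p.
Proof.
move=> H; rewrite /lp.
have -> : [ffun a => loc g w a] = pval p by apply/ffunP => a; rewrite ffunE H pvalE.
exact: valKd.
Qed.

Lemma loc_spec (g : V d -> V d) w a b :
  g (step w a) = step (g w) b -> loc g w a = b.
Proof.
move=> H; rewrite /loc; case: pickP => [b' /eqP H'|H'] /=.
  by apply: (@step_inj (g w)); rewrite -H -H'.
by move: (H' b); rewrite H eqxx.
Qed.

Lemma aut_step (g : V d -> V d) w a : is_aut g ->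
  g (step w a) = step (g w) (lp g w a).
Proof.
move=> [[gi K1 K2] Hadj].
have ex : forall c, exists b, g (step w c) = step (g w) b.
  move=> c; have : adj (g w) (g (step w c)) by rewrite Hadj; apply/adjP; exists c.
  by move/adjP.
have Hl : forall c, g (step w c) = step (g w) (loc g w c).
  move=> c; case: (ex c) => b Hb; by rewrite Hb (loc_spec Hb).
have inj : injective (loc g w).
  move=> x y Hxy; apply: (@step_inj w); apply: (can_inj K1).
  by rewrite !Hl Hxy.
by rewrite (@lp_eq g w (perm inj)) ?permE // => c; rewrite permE.
Qed.

Lemma aut_lp (g : V d -> V d) w a b : is_aut g ->
  g (step w a) = step (g w) b -> lp g w a = b.
Proof.
move=> Ha H; apply: (@step_inj (g w)); by rewrite -aut_step.
Qed.

Section FromStep.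
Variables (g : V d -> V d) (Phi : V d -> {perm 'I_d}).
Hypothesis gstep : forall w c, g (step w c) = step (g w) (Phi w c).

Lemma compat w a : Phi (step w a) a = Phi w a.
Proof.
have H1 := gstep (step w a) a; rewrite stepK in H1.
have H2 := gstep w a.
rewrite H2 in H1.
apply: (@step_inj (step (g w) (Phi w a))).
by rewrite -H1 stepK.
Qed.

Lemma g_rel_size x t : reduced t ->
  size (rel (g x) (g (mulV x t))) = size t /\
  (forall a s, t = a :: s -> ohead (rel (g x) (g (mulV x t))) = Some (Phi (mulV x s) a)).
Proof.
elim: t => [|a s IH] Ht.
  by rewrite /= rel_id.
have Hs : reduced s by exact: (path_sorted Ht).
case: (IH Hs) => IH1 IH2.
have key : ohead (rel (g x) (g (mulV x s))) != Some (Phi (mulV x s) a).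
  clear IH; case: s Ht Hs IH1 IH2 => [|a' s'] Ht Hs IH1 IH2.
    by rewrite /= rel_id.
  rewrite (IH2 a' s' erefl).
  have -> : Phi (mulV x s') a' = Phi (mulV x (a' :: s')) a'.
    by rewrite mulV_cons compat.
  apply/eqP => [[]] /perm_inj Heq; move: Ht => /= /andP[]; by rewrite Heq eqxx.
rewrite mulV_cons gstep rel_step /step_seq (negbTE key) /=.
by split; [rewrite IH1 | move=> a0 s0 [-> ->]].
Qed.

Lemma g_inj : injective g.
Proof.
move=> x y Hxy.
have := g_rel_size x (rel_reduced x y); rewrite relK -Hxy rel_id => -[H _].
have := relK x y; by case: (rel x y) H => // _ <-.
Qed.

Lemma g_surj y : exists x, g x == y.
Proof.
rewrite -(relK (g rootV) y).
elim: (rel (g rootV) y) => [|a t [x /eqP Hx]]; first by exists rootV.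
exists (step x ((Phi x)^-1 a)); rewrite gstep Hx permKV mulV_cons //.
Qed.

Lemma aut_of_step : is_aut g /\ forall w, lp g w = Phi w.
Proof.
have Hb : bijective g.
  exists (fun y => xchoose (g_surj y)).
    by move=> x; apply: g_inj; exact/eqP/(xchooseP (g_surj (g x))).
  by move=> y; exact/eqP/(xchooseP (g_surj y)).
have Ha : is_aut g.
  split=> // u w; apply/idP/idP => /adjP [b Hb'].
    apply/adjP; exists ((Phi u)^-1 b); apply: g_inj.
    by rewrite gstep permKV.
  by apply/adjP; exists (Phi u b); rewrite Hb' gstep.
split=> // w; apply/permP => a.
by apply: (aut_lp Ha); rewrite gstep.
Qed.

Lemma g_odd x0 : odd (size (val (g x0))) = odd (size (val x0)) ->
  forall w, odd (size (val (g w))) = odd (size (val w)).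
Proof.
move=> H0 w.
have := g_rel_size x0 (rel_reduced x0 w); rewrite relK => -[Hs _].
have E1 := odd_mulV (g x0) (rel (g x0) (g w)).
have E2 := odd_mulV x0 (rel x0 w).
rewrite !relK in E1 E2.
by rewrite E1 E2 Hs H0.
Qed.

End FromStep.

End TreeLemmas.

Section Rec.
Variable d : nat.
Variables (u0 w0 : V d) (P0 : {perm 'I_d})
  (R : seq 'I_d -> V d -> 'I_d -> 'I_d -> {perm 'I_d}).
Hypothesis HR : forall t y a b, R t y a b a = b.

Fixpoint Rec (t : seq 'I_d) : V d * {perm 'I_d} :=
  match t with
  | [::] => (w0, P0)
  | a :: s => (step (Rec s).1 ((Rec s).2 a),
               R (a :: s) (step (Rec s).1 ((Rec s).2 a)) a ((Rec s).2 a))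
  end.

Definition gR w := (Rec (rel u0 w)).1.
Definition PhiR w := (Rec (rel u0 w)).2.

Lemma gR_step w c : gR (step w c) = step (gR w) (PhiR w c).
Proof.
rewrite /gR /PhiR rel_step /step_seq.
case: (rel u0 w) => [|x t] //=.
case: (eqVneq (Some x) (Some c)) => [[->]|ne] //=.
by rewrite HR stepK.
Qed.

Lemma gR_u0 : gR u0 = w0.
Proof. by rewrite /gR rel_id. Qed.

Lemma PhiR_u0 : PhiR u0 = P0.
Proof. by rewrite /PhiR rel_id. Qed.

End Rec.

Section Grp.
Variables (d n : nat) (F F' : {group {perm 'I_d}}) (beta : 'I_n -> {set {perm 'I_d}}).
Hypothesis sFF' : F \subset F'.
Hypothesis orbF' : forall (p : {perm 'I_d}) (a : 'I_d), p \in F' -> p a \in orbit 'P F a.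
Hypothesis binj : injective beta.
Hypothesis bin : forall i, beta i \in rcosets F F'.
Hypothesis bsurj : forall C, C \in rcosets F F' -> exists i, beta i = C.
Hypothesis b0 : forall i : 'I_n, val i = 0 -> beta i = F.

Lemma alpha_eq p i j : beta i :* p = beta j -> alpha beta p i = j.
Proof.
move=> H; rewrite /alpha; case: pickP => [j' /eqP H'|H'] /=.
  by apply: binj; rewrite H' H.
by move: (H' j); rewrite H eqxx.
Qed.

Lemma alpha_ex p i : p \in F' -> exists j, beta i :* p = beta j.
Proof.
move=> pF; case/rcosetsP: (bin i) => s sF ->.
have [j Hj] : exists j, beta j = F :* (s * p).
  by apply: bsurj; apply/rcosetsP; exists (s * p) => //; rewrite groupM.
by exists j; rewrite Hj rcosetM.
Qed.

Lemma alpha_F p i : p \in F -> beta i = F -> alpha beta p i = i.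
Proof. by move=> pF Hi; apply: alpha_eq; rewrite Hi rcoset_id. Qed.

Lemma alpha_fixF p i : p \in F' -> beta i = F -> alpha beta p i = i -> p \in F.
Proof.
move=> pF Hi Ha.
case: (alpha_ex i pF) => j Hj.
have := alpha_eq Hj; rewrite Ha => ij; subst j.
have e : F :* p = F by rewrite -Hi Hj.
by rewrite -e rcoset_refl.
Qed.

Lemma alpha_reg p i c : regular_pgroup F -> p \in F' -> alpha beta p i = i -> p c = c ->
  p = 1.
Proof.
move=> [_ reg] pF Ha pc.
case/rcosetsP: (bin i) => s sF' Hs.
case: (alpha_ex i pF) => j Hj.
have := alpha_eq Hj; rewrite Ha => ij; subst j.
have e : F :* (s * p) = F :* s by rewrite rcosetM -Hs.
have qF : s * p * s^-1 \in F.
  by rewrite -mem_rcoset; apply/rcoset_eqP; rewrite e.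
have : s * p * s^-1 \in 'C_F[s^-1 c | 'P].
  rewrite in_setI qF /=; apply/astab1P => /=.
  by rewrite apermE !permM permKV pc.
rewrite reg inE => /eqP H.
have : s * p = s by rewrite -[RHS]mul1g -H mulgKV.
by move/(congr1 (fun x => s^-1 * x)); rewrite mulKg mulVg.
Qed.

Lemma alpha_exists i j a b : b \in orbit 'P F a ->
  exists p, [/\ p \in F', p a = b, alpha beta p i = j &
                (val i = 0 -> val j = 0 -> p \in F)].
Proof.
move=> bo.
case: (boolP ((val i == 0) && (val j == 0))) => [/andP[/eqP i0 /eqP j0]|nz].
  case/orbitP: bo => h hF <-.
  exists h; split => //; first exact: (subsetP sFF').
  by apply: alpha_eq; rewrite (b0 i0) (b0 j0) rcoset_id.
case/rcosetsP: (bin i) => si siF Hi.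
case/rcosetsP: (bin j) => sj sjF Hj.
have : sj^-1 b \in orbit 'P F (si^-1 a).
  apply: (orbit_trans (orbF' b (groupVr sjF))).
  apply: (orbit_trans bo).
  by rewrite orbit_sym; apply: orbF'; rewrite groupV.
case/orbitP => h hF; rewrite /= apermE => Hh.
exists (si^-1 * h * sj); split.
- by rewrite !groupM ?groupV // (subsetP sFF').
- by rewrite !permM Hh permKV.
- by apply: alpha_eq; rewrite Hi Hj -rcosetM mulgA mulKVg rcosetM rcoset_id.
- by move=> /eqP i0 /eqP j0; move: nz; rewrite i0 j0.
Qed.

End Grp.

Section Edges.
Variable d : nat.

Lemma size_vbehead (x : V d) : size (val (vbehead x)) = (size (val x)).-1.
Proof. by rewrite /vbehead /= size_behead. Qed.

Lemma vbehead_step (x : V d) : 0 < size (val x) -> exists c, x = step (vbehead x) c.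
Proof.
case: x => [[|c s] Hs] // _.
exists c; apply: val_inj; rewrite val_step /step_seq /=.
case: s Hs => [|b s] //= /andP[cb _].
by case: eqP => // [[bc]]; rewrite bc eqxx in cb.
Qed.

Lemma eact_ends (g : V d -> V d) (e e' : E d) :
  (g (val e) = val e' /\ g (vbehead (val e)) = vbehead (val e')) \/
  (g (val e) = vbehead (val e') /\ g (vbehead (val e)) = val e') ->
  eact g e = e'.
Proof.
have pos := valP e'.
rewrite /eact /longer; case => [[-> ->]|[-> ->]]; rewrite size_vbehead.
  have -> : (size (val (val e'))).-1 < size (val (val e')) by case: (size _) pos.
  by rewrite valK.
have -> : (size (val (val e')) < (size (val (val e'))).-1) = false.
  by case: (size _) pos => // m _; rewrite /= ltnNge leqnSn.
by rewrite valK.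
Qed.

Lemma edge_decomp (e : E d) : exists (u : V d) (c : 'I_d),
  odd (size (val u)) = false /\
  ((val e = u /\ vbehead (val e) = step u c) \/
   (vbehead (val e) = u /\ val e = step u c)).
Proof.
case: e => [[s Hs] pos] /=.
case: s Hs pos => [|c s] // Hs _.
have Hs' : reduced s by exact: (path_sorted Hs).
set x := exist _ (c :: s) Hs : V d.
have Hb : vbehead x = exist _ s Hs' by apply: val_inj.
have Hx : x = step (exist _ s Hs') c.
  apply: val_inj; rewrite val_step /step_seq /=.
  case: s Hs Hs' {x Hb} => [|y s] //= /andP[cy _] _.
  by case: eqP => // [[yc]]; rewrite yc eqxx in cy.
case: (boolP (odd (size s))) => od.
  exists x, c; split; first by rewrite /= od.
  by left; split => //; rewrite Hb Hx stepK.
exists (exist _ s Hs'), c; split; first by rewrite /= (negbTE od).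
by right; split.
Qed.

End Edges.

Section Main.
Variables (d n : nat) (F F' : {group {perm 'I_d}}) (beta : 'I_n -> {set {perm 'I_d}}).
Hypothesis sFF' : F \subset F'.
Hypothesis orbF' : forall (p : {perm 'I_d}) (a : 'I_d), p \in F' -> p a \in orbit 'P F a.
Hypothesis binj : injective beta.
Hypothesis bin : forall i, beta i \in rcosets F F'.
Hypothesis bsurj : forall C, C \in rcosets F F' -> exists i, beta i = C.
Hypothesis b0 : forall i : 'I_n, val i = 0 -> beta i = F.

Section Construct.
Variables (f f' : V d -> 'I_n) (u0 w0 : V d) (a0 b0' : 'I_d).
Hypothesis ff : finsupp f.
Hypothesis ff' : finsupp f'.
Hypothesis par : odd (size (val u0)) = odd (size (val w0)).
Hypothesis ab : b0' \in orbit 'P F a0.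

Definition Rl (t : seq 'I_d) (y : V d) (a b : 'I_d) : {perm 'I_d} :=
  odflt (tperm a b) [pick p in F' | (p a == b) &&
     (alpha beta p (f (mulV u0 t)) == f' y) &&
     ((val (f (mulV u0 t)) == 0) && (val (f' y) == 0) ==> (p \in F))].

Lemma Rl_a t y a b : Rl t y a b a = b.
Proof.
rewrite /Rl; case: pickP => [p /andP[_ /andP[/andP[/eqP -> _] _]]|_] //=.
exact: tpermL.
Qed.

Lemma Rl_spec t y a b : b \in orbit 'P F a ->
  [/\ Rl t y a b \in F', Rl t y a b a = b,
      alpha beta (Rl t y a b) (f (mulV u0 t)) = f' y &
      (val (f (mulV u0 t)) = 0 -> val (f' y) = 0 -> Rl t y a b \in F)].
Proof.
move=> bo; rewrite /Rl; case: pickP => [p /andP[pF /andP[/andP[/eqP pa /eqP pal] pz]]|none] /=.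
  split => // /eqP i0 /eqP j0; by move: pz; rewrite i0 j0.
have [p [pF pa pal pz]] := alpha_exists sFF' orbF' binj bin b0
   (f (mulV u0 t)) (f' y) bo.
move: (none p); rewrite pF pa pal !eqxx /=.
case: (val (f (mulV u0 t)) =P 0) => [i0|i0] /=; last by [].
by case: (val (f' y) =P 0) => [j0|j0] //=; rewrite pz.
Qed.

Lemma construct : exists g, inGstar F F' g /\
  (forall w, f' (g w) = alpha beta (lp g w) (f w)) /\
  g u0 = w0 /\ g (step u0 a0) = step w0 b0'.
Proof.
have [P0 [P0F P0a P0al P0z]] := alpha_exists sFF' orbF' binj bin b0
   (f u0) (f' w0) ab.
pose g := gR u0 w0 P0 Rl.
pose Phi := PhiR u0 w0 P0 Rl.
have gstep : forall w c, g (step w c) = step (g w) (Phi w c).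
  by move=> w c; apply: gR_step; exact: Rl_a.
have [Haut Hlp] := aut_of_step gstep.
have recF : forall t, (Rec w0 P0 Rl t).2 \in F'.
  elim=> [|a s IH] //=.
  by case: (Rl_spec (a :: s) (step (Rec w0 P0 Rl s).1 ((Rec w0 P0 Rl s).2 a)) (orbF' a IH)).
have spec : forall w, (w = u0 /\ Phi w = P0 /\ g w = w0) \/
   (alpha beta (Phi w) (f w) = f' (g w) /\
    (val (f w) = 0 -> val (f' (g w)) = 0 -> Phi w \in F)).
  move=> w; rewrite /Phi /g /PhiR /gR.
  case E: (rel u0 w) => [|a s] /=.
    by left; split => //; rewrite -(relK u0 w) E.
  right.
  have Hw : mulV u0 (a :: s) = w by rewrite -E relK.
  case: (Rl_spec (a :: s) (step (Rec w0 P0 Rl s).1 ((Rec w0 P0 Rl s).2 a)) (orbF' a (recF s))).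
  by rewrite Hw => _ _ H1 H2; split.
have gu0 : g u0 = w0 by apply: gR_u0.
have Phiu0 : Phi u0 = P0 by apply: PhiR_u0.
have [ginv K1 K2] := proj1 Haut.
case: ff => sf Hsf; case: ff' => sf' Hsf'.
exists g; split; [split; [split|] | split; [|split]].
- exact: Haut.
- move=> v; rewrite Hlp; exact: recF.
- exists (u0 :: sf ++ map ginv sf') => v; rewrite Hlp => nF.
  rewrite in_cons mem_cat.
  case: (spec v) => [[-> _]|[_ Hz]]; first by rewrite eqxx.
  case: (val (f v) =P 0) => [i0|/eqP i0]; last by rewrite Hsf ?orbT.
  case: (val (f' (g v)) =P 0) => [j0|/eqP j0]; first by rewrite (Hz i0 j0) in nF.
  by apply/orP; right; apply/orP; right; rewrite -[v]K1; apply: map_f; apply: Hsf'.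
- apply: (g_odd gstep (x0 := u0)); by rewrite gu0 par.
- move=> w; rewrite Hlp; case: (spec w) => [[-> [-> ->]]|[-> _]] //.
  by rewrite gu0.
- by rewrite gstep gu0 Phiu0 P0a.
Qed.

End Construct.

Definition ends (e : E d) (u : V d) (c : 'I_d) :=
  (val e = u /\ vbehead (val e) = step u c) \/
  (vbehead (val e) = u /\ val e = step u c).

Lemma transport (f f' : V d -> 'I_n) (e e' : E d) u0 a0 w0 b0' :
  finsupp f -> finsupp f' ->
  odd (size (val u0)) = false -> odd (size (val w0)) = false ->
  b0' \in orbit 'P F a0 -> ends e u0 a0 -> ends e' w0 b0' ->
  exists g, inGstar F F' g /\ xact beta g (f, e) (f', e').
Proof.
move=> ff ff' pu pw ab He He'.
have par : odd (size (val u0)) = odd (size (val w0)) by rewrite pu pw.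
have [g [Hg [Hf [gu gs]]]] := construct ff ff' par ab.
exists g; split => //; split => //=.
apply: eact_ends.
case: He => [[-> ->]|[-> ->]]; case: He' => [[-> ->]|[-> ->]].
- by left.
- by right.
- by right.
- by left.
Qed.

Lemma eact_fix (g : V d -> V d) (e : E d) : is_aut g ->
  (forall v, odd (size (val (g v))) = odd (size (val v))) ->
  eact g e = e -> g (val e) = val e /\ g (vbehead (val e)) = vbehead (val e).
Proof.
move=> Ha Hp.
set x := val e; set y := vbehead x.
have [c Hxy] : exists c, x = step y c by exact: (vbehead_step (valP e)).
have gxy := @aut_step d g y c Ha; rewrite -Hxy in gxy.
set b := lp g y c in gxy.
rewrite /eact /longer -/x -/y.
have Hs := size_step (g y) b; rewrite -gxy in Hs.
case: ifP => [lt|nlt].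
  have pos : 0 < size (val (g x)) := leq_ltn_trans (leq0n _) lt.
  rewrite insubT /= => /(congr1 val) /= gx.
  split => //.
  have gy' : g y = step (g x) b by rewrite gxy stepK.
  rewrite gx in gy'.
  rewrite gy'; move: lt; rewrite gy' gx size_step; case: ifP => hd lt.
    by apply: val_inj; rewrite val_step /step_seq hd.
  by move: lt; rewrite ltnNge leqnSn.
move: nlt Hs; case: ifP => [hd|_] nlt Hs; last by rewrite Hs ltnSn in nlt.
have pos : 0 < size (val (g y)) by move: hd; case: (val (g y)).
rewrite insubT /= => /(congr1 val) /= gy.
have h1 := Hp y; rewrite gy in h1.
change (odd (size (val x)) = odd (size (val y))) in h1.
have h2 : odd (size (val x)) = ~~ odd (size (val y)) by rewrite Hxy odd_step.
by rewrite h2 in h1; case: (odd _) h1.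
Qed.

Lemma free_reg (f : V d -> 'I_n) (e : E d) g : regular_pgroup F ->
  inGstar F F' g -> xact beta g (f, e) (f, e) -> forall v, g v = v.
Proof.
move=> reg [[Ha HF' _] Hpar] [Hf He]; simpl in Hf, He.
have spread : forall w c, g w = w -> g (step w c) = step w c ->
    forall a, g (step w a) = step w a.
  move=> w c gw gwc a.
  have lc : lp g w c = c by apply: (aut_lp Ha); rewrite gw gwc.
  have fw : alpha beta (lp g w) (f w) = f w by rewrite -Hf gw.
  have l1 := alpha_reg binj bin bsurj reg (HF' w) fw lc.
  by rewrite (aut_step _ _ Ha) l1 perm1 gw.
have [gx gy] := eact_fix Ha Hpar He.
set x := val e in gx gy.
pose Good w := g w = w /\ forall a, g (step w a) = step w a.
have Gx : Good x.
  have [c Hxy] : exists c, x = step (vbehead x) c by exact: (vbehead_step (valP e)).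
  split => //; apply: (spread x c gx).
  have sx : step x c = vbehead x by rewrite {1}Hxy stepK.
  by rewrite sx gy.
have GG : forall t, Good (mulV x t).
  elim=> [|a t [gw ga]] //.
  rewrite mulV_cons; split; first exact: ga.
  apply: (spread _ a (ga a)).
  by rewrite stepK gw.
by move=> v; rewrite -(relK x v); case: (GG (rel x v)).
Qed.

Lemma partb (e : E d) (f0 : V d -> 'I_n) (g : V d -> V d) :
  (forall v, val (f0 v) = 0) ->
  (inG F F' g /\ xact beta g (f0, e) (f0, e)) <-> (inU F g /\ eact g e = e).
Proof.
move=> H0; have f0E : forall v w, f0 v = f0 w by move=> v w; apply: val_inj; rewrite !H0.
split.
  move=> [[Ha HF' _] [Hf He]]; split => //; split => // v.
  apply: (alpha_fixF binj bin bsurj (HF' v) (b0 (H0 v))).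
  by rewrite -(Hf v); exact: f0E.
move=> [[Ha HF] He]; split.
  split => //; first by move=> v; exact: (subsetP sFF' _ (HF v)).
  by exists [::] => v; rewrite HF.
split => // w /=.
by rewrite (alpha_F binj (HF w) (b0 (H0 w))); exact: f0E.
Qed.

End Main.

Definition edge1 (d : nat) (c : 'I_d) : E d :=
  exist (fun v : V d => 0 < size (val v)) (exist (fun s => reduced s) [:: c] isT) isT.

Unset Implicit Arguments.
Set Strict Implicit.

Theorem proposition2 (d n : nat) (F F' : {group {perm 'I_d}})
    (beta : 'I_n -> {set {perm 'I_d}}) :
  3 <= d ->
  F \subset F' ->
  (forall (p : {perm 'I_d}) (a : 'I_d), p \in F' -> p a \in orbit 'P F a) ->
  n = (#|F' : F|)%g ->
  injective beta ->
  (forall i, beta i \in rcosets F F') ->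
  (forall C, C \in rcosets F F' -> exists i, beta i = C) ->
  (forall i : 'I_n, val i = 0 -> beta i = F) ->
  [/\ (* (a) finitely many orbits of G(F,F')^* *)
      (exists (k : nat) (xs : nat -> (V d -> 'I_n) * E d),
         (forall i, i < k -> finsupp (xs i).1) /\
         forall y : (V d -> 'I_n) * E d, finsupp y.1 ->
           exists2 i, i < k & exists g, inGstar F F' g /\ xact beta g (xs i) y),
      (* (a) transitivity when F is transitive *)
      ([transitive F, on [set: 'I_d] | 'P] ->
       forall x y : (V d -> 'I_n) * E d, finsupp x.1 -> finsupp y.1 ->
         exists g, inGstar F F' g /\ xact beta g x y),
      (* (b) stabilizer of ((0), e) in G(F,F') = stabilizer of e in U(F) *)
      (forall (e : E d) (f0 : V d -> 'I_n) (g : V d -> V d),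
         (forall v, val (f0 v) = 0) ->
         (inG F F' g /\ xact beta g (f0, e) (f0, e)) <-> (inU F g /\ eact g e = e))
    & (* consequence: F regular => G(F,F')^* acts freely and transitively *)
      (regular_pgroup F ->
       (forall (x : (V d -> 'I_n) * E d) (g : V d -> V d), finsupp x.1 ->
          inGstar F F' g -> xact beta g x x -> forall v, g v = v) /\
       (forall x y : (V d -> 'I_n) * E d, finsupp x.1 -> finsupp y.1 ->
          exists g, inGstar F F' g /\ xact beta g x y))].
Proof.
move=> d3 sFF' orbF' Hn binj bin bsurj b0.
have trans : [transitive F, on [set: 'I_d] | 'P] ->
    forall x y : (V d -> 'I_n) * E d, finsupp x.1 -> finsupp y.1 ->
    exists g, inGstar F F' g /\ xact beta g x y.
  move=> tr [f e] [f' e'] /= ff ff'.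
  have [u0 [a0 [pu Hu]]] := edge_decomp e.
  have [w0 [b0' [pw Hw]]] := edge_decomp e'.
  apply: (transport sFF' orbF' binj bin b0 ff ff' pu pw _ Hu Hw).
  by rewrite (atransP tr) ?inE.
split => //.
- have n_gt0 : 0 < n by rewrite Hn indexg_gt0.
  have d_gt0 : 0 < d by apply: leq_trans d3.
  pose i0 : 'I_n := Ordinal n_gt0.
  pose c0 : 'I_d := Ordinal d_gt0.
  pose fz : V d -> 'I_n := fun _ => i0.
  have fzs : finsupp fz by exists [::].
  exists d, (fun i => (fz, edge1 (insubd c0 i))); split => // [[f' e']] /= ff'.
  have [w0 [c [pw Hw]]] := edge_decomp e'.
  exists (val c); first exact: ltn_ord.
  rewrite valKd.
  apply: (transport sFF' orbF' binj bin b0 fzs ff' (u0 := rootV d) (a0 := c) _ pw _ _ Hw) => //.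
    exact: orbit_refl.
  by right; split; apply: val_inj.
- move=> e f0 g H0; exact: (partb sFF' binj bin bsurj b0 e g H0).
- move=> reg; split; last by apply: trans; case: reg.
  move=> [f e] g _ Hg Hx v.
  exact: (free_reg binj bin bsurj reg Hg Hx).
Qed.
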